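(* Let $x$ be a context, $\pi_{\mathrm{old}}(\cdot\mid x)$ a distribution on a finite response set $\mathcal Y(x)$, $r:\mathcal Y(x)\to\mathbb R$ a reward, $\beta>0$, and $G\ge1$. Let $y_1,\dots,y_G$ be i.i.d. from $\pi_{\mathrm{old}}(\cdot\mid x)$, $r_j=r(y_j)$, and \[ \widehat A_i^\beta=r_i-\beta\log\Big(\frac1G\sum_{j=1}^G\exp(r_j/\beta)\Big),\qquad A^\beta(x,y)=\mathbb E\big[\widehat A_i^\beta\mid y_i=y\big] \] (which does not depend on $i$). Then $\mathbb E[\exp(\widehat A_i^\beta/\beta)]=1$ and \[ \mathbb E_{y\sim\pi_{\mathrm{old}}(\cdot\mid x)}\Big[\exp\Big(\frac{A^\beta(x,y)}{\beta}\Big)\Big]\le1 . \] Consequently, with $A=A^\beta$, there is no $\tau>0$ satisfying $\mathbb E_{y\sim\pi_{\mathrm{old}}}\big[\frac1\tau W_0(\tau e^{A^\beta(x,y)/\beta})\big]=1$, i.e. the induced Lambert multiplier satisfies $\tau_s\le0$.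
   Context: $W_0$ denotes the principal branch of the Lambert $W$ function, i.e. the inverse of $w\mapsto we^w$ on $[-1,\infty)$, satisfying $W_0(z)e^{W_0(z)}=z$. *)

(* Defs.v *)
From HB Require Import structures.
From mathcomp Require Import all_boot all_order all_algebra.
From mathcomp Require Import all_classical all_reals all_analysis.
Set Implicit Arguments. Unset Strict Implicit. Unset Printing Implicit Defensive.
Import Order.TTheory GRing.Theory Num.Theory.
Local Open Scope ring_scope.
Local Open Scope classical_set_scope.

(* Principal branch of Lambert W: the unique w >= -1 with w e^w = z
   (defined for z >= -1/e; arbitrary value 0 outside the domain). *)
Definition W0 {R : realType} (z : R) : R :=
  xget 0 [set w : R | -1 <= w /\ w * expR w = z].

Definition sample (Y : finType) (G : nat) := {ffun 'I_G -> Y}.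

Definition iid_weight {R : realType} {Y : finType} {G : nat}
  (pi : Y -> R) (t : sample Y G) : R := \prod_(j < G) pi (t j).

Definition iid_expect {R : realType} {Y : finType} {G : nat}
  (pi : Y -> R) (f : sample Y G -> R) : R :=
  \sum_(t : sample Y G) iid_weight pi t * f t.

Definition Ahat {R : realType} {Y : finType} {G : nat}
  (r : Y -> R) (beta : R) (i : 'I_G) (t : sample Y G) : R :=
  r (t i) - beta * ln (G%:R^-1 * \sum_(j < G) expR (r (t j) / beta)).

(* A^beta(x,y) = E[ \hat A_i^beta | y_i = y ]: since the y_j are independent,
   this is the expectation over the other coordinates (j != i) drawn i.i.d.
   from pi, with coordinate i fixed to y. *)
Definition Abeta {R : realType} {Y : finType} {G : nat}
  (pi : Y -> R) (r : Y -> R) (beta : R) (i : 'I_G) (y : Y) : R :=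
  \sum_(t : sample Y G | t i == y)
     (\prod_(j < G | j != i) pi (t j)) * Ahat r beta i t.

(* Main.v *)
Require Import Defs.
From HB Require Import structures.
From mathcomp Require Import all_boot all_order all_algebra all_fingroup.
From mathcomp Require Import all_classical all_reals all_analysis.
From mathcomp Require Import ring lra.
Import Order.TTheory GRing.Theory Num.Theory.
Local Open Scope ring_scope.
Set Implicit Arguments. Unset Strict Implicit.

Definition tp (Y : finType) (G : nat) (s : {perm 'I_G}) (t : sample Y G) : sample Y G :=
  [ffun j => t (s j)].


Lemma tp_inj (Y : finType) (G : nat) (s : {perm 'I_G}) : injective (@tp Y G s).
Proof.
move=> t1 t2 /ffunP H; apply/ffunP => k; have := H (s^-1 k)%g.
by rewrite !ffunE permKV.
Qed.

Lemma iid_weight_tp (R : realType) (Y : finType) (G : nat) (pi : Y -> R)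
  (s : {perm 'I_G}) t : iid_weight pi (tp s t) = iid_weight pi t.
Proof.
rewrite /iid_weight /tp [RHS](reindex_inj (@perm_inj _ s)) /=.
by apply: eq_bigr => j _; rewrite ffunE.
Qed.

Lemma sumexp_tp (R : realType) (Y : finType) (G : nat) (r : Y -> R) beta
  (s : {perm 'I_G}) t :
  \sum_(j < G) expR (r (tp s t j) / beta) = \sum_(j < G) expR (r (t j) / beta).
Proof.
rewrite [RHS](reindex_inj (@perm_inj _ s)) /=.
by apply: eq_bigr => j _; rewrite ffunE.
Qed.

Lemma Ahat_tp (R : realType) (Y : finType) (G : nat) (r : Y -> R) beta
  (s : {perm 'I_G}) i t : Ahat r beta i (tp s t) = Ahat r beta (s i) t.
Proof. by rewrite /Ahat sumexp_tp ffunE. Qed.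

Lemma Abeta_perm (R : realType) (Y : finType) (G : nat) (pi r : Y -> R) beta
  (s : {perm 'I_G}) i y : Abeta pi r beta i y = Abeta pi r beta (s i) y.
Proof.
rewrite /Abeta (reindex_inj (@tp_inj Y G s)) /=.
apply: eq_big => [t|t _]; first by rewrite ffunE.
rewrite Ahat_tp; congr (_ * _).
rewrite [RHS](reindex_inj (@perm_inj _ s)) /=.
apply: eq_big => [j|j _]; first by rewrite (inj_eq (@perm_inj _ s)).
by rewrite ffunE.
Qed.

Definition fr (R : realType) (Y : finType) (G : nat) (r : Y -> R) beta
  (i : 'I_G) (t : sample Y G) : R :=
  expR (r (t i) / beta) / \sum_(j < G) expR (r (t j) / beta).


Lemma E_fr_perm (R : realType) (Y : finType) (G : nat) (pi r : Y -> R) beta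
  (s : {perm 'I_G}) (i : 'I_G) :
  iid_expect pi (fr r beta i) = iid_expect pi (fr r beta (s i)).
Proof.
rewrite /iid_expect (reindex_inj (@tp_inj Y G s)) /=.
apply: eq_bigr => t _; rewrite iid_weight_tp /fr sumexp_tp ffunE //.
Qed.

Lemma E_fr_eq (R : realType) (Y : finType) (G : nat) (pi r : Y -> R) beta (i i' : 'I_G) :
  iid_expect pi (fr r beta i) = iid_expect pi (fr r beta i').
Proof. by rewrite (E_fr_perm pi r beta (tperm i i') i) tpermL. Qed.

Lemma total_mass (R : realType) (Y : finType) (G : nat) (pi : Y -> R)
  (pi_sum1 : \sum_(y : Y) pi y = 1) :
  \sum_(t : sample Y G) iid_weight pi t = 1.
Proof.
rewrite /iid_weight /sample -(bigA_distr_bigA (fun (j : 'I_G) (y : Y) => pi y)) /=.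
by rewrite big1 // => j _; rewrite pi_sum1.
Qed.

Lemma S_gt0 (R : realType) (Y : finType) (G : nat) (r : Y -> R) beta
  (G_ge1 : (1 <= G)%N) (t : sample Y G) :
  0 < \sum_(j < G) expR (r (t j) / beta).
Proof.
case: G G_ge1 t => // n _ t.
rewrite big_ord_recl ltr_pwDl ?expR_gt0 //.
by apply: sumr_ge0 => j _; rewrite expR_ge0.
Qed.

Lemma expAhat (R : realType) (Y : finType) (G : nat) (r : Y -> R) beta
  (beta_gt0 : 0 < beta) (G_ge1 : (1 <= G)%N) (i : 'I_G) (t : sample Y G) :
  expR (Ahat r beta i t / beta) = G%:R * fr r beta i t.
Proof.
have hS := S_gt0 r beta G_ge1 t.
have hG : 0 < (G%:R : R) by rewrite ltr0n.
rewrite /Ahat /fr mulrBl mulrAC divff ?gt_eqF // mul1r expRD expRN lnK; last first.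
  by rewrite posrE mulr_gt0 // invr_gt0.
by rewrite invfM invrK mulrCA mulrA.
Qed.

Lemma part2 (R : realType) (Y : finType) (G : nat) (pi r : Y -> R) beta
  (pi_sum1 : \sum_(y : Y) pi y = 1)
  (beta_gt0 : 0 < beta) (G_ge1 : (1 <= G)%N) (i : 'I_G) :
  iid_expect pi (fun t => expR (Ahat r beta i t / beta)) = 1.
Proof.
have -> : iid_expect pi (fun t => expR (Ahat r beta i t / beta)) =
          \sum_(i' < G) iid_expect pi (fr r beta i').
  rewrite (eq_bigr (fun _ => iid_expect pi (fr r beta i))); last first.
    by move=> i' _; apply: E_fr_eq.
  rewrite sumr_const card_ord /iid_expect -mulr_natl mulr_sumr.
  apply: eq_bigr => t _; rewrite expAhat //; ring.
rewrite /iid_expect exchange_big /= -(total_mass G pi_sum1).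
apply: eq_bigr => t _; rewrite -mulr_sumr /fr -mulr_suml divff ?mulr1 //.
by rewrite gt_eqF // S_gt0.
Qed.

Lemma jensen_exp (R : realType) (T : finType) (P : pred T) (w a : T -> R) :
  (forall t, P t -> 0 <= w t) -> \sum_(t | P t) w t = 1 ->
  expR (\sum_(t | P t) w t * a t) <= \sum_(t | P t) w t * expR (a t).
Proof.
move=> w0 w1; set m := \sum_(t | P t) w t * a t.
have key t : P t -> w t * (expR m * (1 + (a t - m))) <= w t * expR (a t).
  move=> Pt; apply: ler_wpM2l; first exact: w0.
  have -> : a t = m + (a t - m) by ring.
  rewrite expRD; apply: ler_wpM2l; first exact: expR_ge0.
  have -> : m + (a t - m) - m = a t - m by ring.
  exact: expR_ge1Dx.
apply: (le_trans _ (ler_sum _ key)).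
have -> : \sum_(t | P t) w t * (expR m * (1 + (a t - m))) =
   expR m * (\sum_(t | P t) w t + \sum_(t | P t) w t * a t - m * \sum_(t | P t) w t).
  rewrite !mulr_sumr -big_split /= -sumrB mulr_sumr.
  by apply: eq_bigr => t _; ring.
by rewrite w1 -/m mulr1 addrK mulr1.
Qed.

Lemma cond_mass (R : realType) (Y : finType) (G : nat) (pi : Y -> R)
  (pi_sum1 : \sum_(y : Y) pi y = 1) (i : 'I_G) (y : Y) :
  \sum_(t : sample Y G | t i == y) \prod_(j < G | j != i) pi (t j) = 1.
Proof.
pose F := fun (j : 'I_G) (z : Y) => if j == i then (z == y)%:R else pi z.
have -> : \sum_(t : sample Y G | t i == y) \prod_(j < G | j != i) pi (t j) =
          \sum_(t : sample Y G) \prod_(j < G) F j (t j).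
  rewrite big_mkcond /=; apply: eq_bigr => t _.
  rewrite [RHS](bigD1 i) //= /F eqxx.
  case: eqP => _; last by rewrite mul0r.
  rewrite mul1r; apply: eq_bigr => j /negbTE -> //.
rewrite /sample -(bigA_distr_bigA F) /=.
rewrite big1 // => j _; rewrite /F; case: eqP => _; last exact: pi_sum1.
rewrite (bigD1 y) //= eqxx big1 ?addr0 // => z /negbTE -> //.
Qed.

Lemma disintegrate (R : realType) (Y : finType) (G : nat) (pi : Y -> R)
  (i : 'I_G) (g : sample Y G -> R) :
  \sum_(y : Y) pi y * \sum_(t : sample Y G | t i == y)
      (\prod_(j < G | j != i) pi (t j)) * g t = iid_expect pi g.
Proof.
rewrite /iid_expect (partition_big (fun t : sample Y G => t i) predT) //=.
apply: eq_bigr => y _; rewrite mulr_sumr; apply: eq_bigr => t /eqP <-.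
by rewrite /iid_weight [in RHS](bigD1 i) //= mulrA.
Qed.

Lemma part3 (R : realType) (Y : finType) (G : nat) (pi r : Y -> R) beta
  (pi_ge0 : forall y, 0 <= pi y) (pi_sum1 : \sum_(y : Y) pi y = 1)
  (beta_gt0 : 0 < beta) (G_ge1 : (1 <= G)%N) (i : 'I_G) :
  \sum_(y : Y) pi y * expR (Abeta pi r beta i y / beta) <= 1.
Proof.
rewrite -(part2 r pi_sum1 beta_gt0 G_ge1 i) -(disintegrate pi i).
apply: ler_sum => y _; apply: ler_wpM2l => //.
rewrite /Abeta mulr_suml.
under eq_bigr do rewrite -mulrA.
apply: jensen_exp; last exact: cond_mass.
by move=> t _; apply: prodr_ge0.
Qed.

Lemma W0_lt (R : realType) (z : R) : 0 < z -> W0 z < z.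
Proof.
move=> z0; rewrite /W0.
case: (pselect (exists w : R, -1 <= w /\ w * expR w = z)) => [ex|nex].
  have [_ H] := xgetPex 0 ex.
  set w := xget _ _ in H *.
  have w0 : 0 < w.
    rewrite ltNge; apply/negP => wle0.
    have : w * expR w <= 0 by rewrite mulr_le0_ge0 // expR_ge0.
    by rewrite H leNgt z0.
  rewrite -H -{1}(mulr1 w) ltr_pM2l //.
  by rewrite -expR0 ltr_expR.
rewrite xgetPN // => w Pw; apply: nex; by exists w.
Qed.

Theorem mainTheorem6 (R : realType) (Y : finType) (pi : Y -> R) (r : Y -> R)
  (beta : R) (G : nat)
  (pi_ge0 : forall y, 0 <= pi y) (pi_sum1 : \sum_(y : Y) pi y = 1)
  (beta_gt0 : 0 < beta) (G_ge1 : (1 <= G)%N) :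
  (forall i i' : 'I_G, forall y : Y, Abeta pi r beta i y = Abeta pi r beta i' y) /\
  (forall i : 'I_G, iid_expect pi (fun t => expR (Ahat r beta i t / beta)) = 1) /\
  (forall i : 'I_G, \sum_(y : Y) pi y * expR (Abeta pi r beta i y / beta) <= 1) /\
  (forall i : 'I_G, ~ exists tau : R, 0 < tau /\
      \sum_(y : Y) pi y * (tau^-1 * W0 (tau * expR (Abeta pi r beta i y / beta))) = 1).
Proof.
split.
  by move=> i i' y; rewrite (Abeta_perm pi r beta (tperm i i') i) tpermL.
split; first by move=> i; apply: part2.
split; first by move=> i; apply: part3.
move=> i [tau [tau0 Heq]].
have [y0 py0] : exists y0, 0 < pi y0.
  apply/not_existsP => H; move: pi_sum1; rewrite big1 => [/eqP|y _].
    by rewrite eq_sym oner_eq0.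
  by apply/eqP; rewrite eq_le pi_ge0 andbT leNgt; apply/negP => /(H y).
have := part3 r pi_ge0 pi_sum1 beta_gt0 G_ge1 i.
rewrite -Heq => Hle.
suff: \sum_(y : Y) pi y * (tau^-1 * W0 (tau * expR (Abeta pi r beta i y / beta))) <
      \sum_(y : Y) pi y * expR (Abeta pi r beta i y / beta).
  by rewrite ltNge Hle.
have hlt y : tau^-1 * W0 (tau * expR (Abeta pi r beta i y / beta)) <
              expR (Abeta pi r beta i y / beta).
  by rewrite ltr_pdivrMl // W0_lt // mulr_gt0 // expR_gt0.
rewrite (bigD1 y0) //= [X in _ < X](bigD1 y0) //=.
apply: ltr_leD; first by rewrite ltr_pM2l.
by apply: ler_sum => y _; apply: ler_wpM2l => //; apply: ltW.
Qed.
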